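(* Let $\mathcal O$ be the suboperad of $\mathrm{CNCB}$ generated by $r:=T_{ubu}$ and $w:=T_{bub}$. Then $\mathcal O$ admits the presentation with generators $r,w$ of arity $2$ and relations $$w\circ_1 w=w\circ_2 w,\qquad r\circ_1 r=r\circ_2 r.$$ That is, $\mathcal O$ is isomorphic, via the morphism sending the generators to $r$ and $w$, to the quotient of the free operad on two binary generators by the operadic congruence generated by these relations.
   Context: For $n\ge2$, a bicoloured noncrossing configuration (BNC) of size $n$ is a regular polygon with vertices $1,\dots,n+1$ clockwise, together with disjoint sets of blue and red arcs among the arcs $(i,j)$, $1\le i<j\le n+1$. The arcs $(i,i+1)$ are the edges ($i$th edge), $(1,n+1)$ is the base, and the others are diagonals. Coloured arcs are pairwise noncrossing ($(i,j),(k,l)$ cross iff $i<k<j<l$ or $k<i<l<j$), and red arcs are diagonals. There is one BNC of size $1$, a blue segment, which is the unit. The operad $\mathrm{CNCB}$ has the BNCs as elements (arity = size). Its composition $\mathfrak C\circ_i\mathfrak D$ ($\mathfrak C$ of size $n$, $\mathfrak D$ of size $m$) glues the base of $\mathfrak D$ on the $i$th edge of $\mathfrak C$. Arcs $(a,b)$ of $\mathfrak C$ become $(\sigma(a),\sigma(b))$ with $\sigma(v)=v$ for $v\le i$ and $v+m-1$ otherwise, and arcs $(a,b)$ of $\mathfrak D$ become $(a+i-1,b+i-1)$, keeping colours. The exception is the arc $(i,i+m)$, which is red if the $i$th edge of $\mathfrak C$ and the base of $\mathfrak D$ are both uncoloured, blue if both are blue, and uncoloured otherwise. For $x,y,z\in\{b,u\}$,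 $T_{xyz}$ denotes the BNC of size $2$ (a triangle with vertices $1,2,3$) whose first edge $(1,2)$ has colour $x$, whose base $(1,3)$ has colour $y$, and whose second edge $(2,3)$ has colour $z$, where $b$ = blue and $u$ = uncoloured. The suboperad generated by a set is the smallest suboperad containing it. *)

(* Defs.v *)
From mathcomp Require Import all_boot.
Set Implicit Arguments. Unset Strict Implicit. Unset Printing Implicit Defensive.

Inductive col := Uc | Bc | Rc.

(* A (candidate) bicoloured noncrossing configuration of size [bsize]:
   vertices 1..bsize+1, and [bcol a b] is the colour of the arc (a,b)
   for 1 <= a < b <= bsize+1 (values outside this range are irrelevant). *)
Record bnc := BNC { bsize : nat; bcol : nat -> nat -> col }.

Definition is_arc (n a b : nat) : bool := (1 <= a) && (a < b) && (b <= n.+1).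

Definition bnc_eq (C D : bnc) : Prop :=
  bsize C = bsize D /\
  forall a b, is_arc (bsize C) a b -> bcol C a b = bcol D a b.

(* Validity of a BNC (documentation; size 1 is the blue segment). *)
Definition crossing (i j k l : nat) : bool := ((i < k) && (k < j) && (j < l)) || ((k < i) && (i < l) && (l < j)).
Definition valid_bnc (C : bnc) : Prop :=
  let n := bsize C in
  (n = 1 /\ bcol C 1 2 = Bc) \/
  (2 <= n /\
   (forall a b, is_arc n a b -> bcol C a b = Rc -> (a.+1 < b) /\ ~ (a = 1 /\ b = n.+1)) /\
   (forall a b c d, is_arc n a b -> is_arc n c d -> bcol C a b <> Uc -> bcol C c d <> Uc ->
      ~~ crossing a b c d)).

(* Colour of the arc (i, i+m) created by gluing. *)
Definition glue_col (x y : col) : col :=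
  match x, y with
  | Uc, Uc => Rc
  | Bc, Bc => Bc
  | _, _ => Uc
  end.

(* Partial composition C o_i D: glue the base of D on the i-th edge of C. *)
Definition compb (C : bnc) (i : nat) (D : bnc) : bnc :=
  let n := bsize C in let m := bsize D in
  let sinv v := if v <= i then v else v - (m - 1) in
  let inimg v := (v <= i) || (i + m <= v) in
  {| bsize := n + m - 1;
     bcol := fun a b =>
       if (a == i) && (b == i + m) then glue_col (bcol C i i.+1) (bcol D 1 m.+1)
       else if (i <= a) && (b <= i + m) then bcol D (a - i).+1 (b - i).+1
       else if inimg a && inimg b then bcol C (sinv a) (sinv b)
       else Uc |}.

Definition unit_bnc : bnc := {| bsize := 1; bcol := fun a b => if (a == 1) && (b == 2) then Bc else Uc |}.

Definition T (x y z : col) : bnc :=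
  {| bsize := 2;
     bcol := fun a b =>
       if (a == 1) && (b == 2) then x
       else if (a == 1) && (b == 3) then y
       else if (a == 2) && (b == 3) then z
       else Uc |}.

Definition r_bnc : bnc := T Uc Bc Uc.
Definition w_bnc : bnc := T Bc Uc Bc.

Inductive in_O : bnc -> Prop :=
| inO_unit : in_O unit_bnc
| inO_r : in_O r_bnc
| inO_w : in_O w_bnc
| inO_comp C D i : in_O C -> in_O D -> 1 <= i <= bsize C -> in_O (compb C i D).

(* The free (nonsymmetric) operad on two binary generators: planar binary trees
   with internal nodes labelled by a generator; leaves are inputs. *)
Inductive gen := gR | gW.
Inductive tree := Leaf | Node of gen & tree & tree.

Definition gen_bnc (g : gen) : bnc := match g with gR => r_bnc | gW => w_bnc end.

Fixpoint ev (t : tree) : bnc :=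
  match t with
  | Leaf => unit_bnc
  | Node g l r => compb (compb (gen_bnc g) 2 (ev r)) 1 (ev l)
  end.

(* Operadic congruence generated by  g o_1 g = g o_2 g  for g = w and g = r:
   smallest equivalence relation containing all instances
   g(g(a,b),c) = g(a,g(b,c)) and compatible with the tree constructors. *)
Inductive cong : tree -> tree -> Prop :=
| cong_assoc g a b c : cong (Node g (Node g a b) c) (Node g a (Node g b c))
| cong_refl t : cong t t
| cong_sym t u : cong t u -> cong u t
| cong_trans t u v : cong t u -> cong u v -> cong t v
| cong_node g a a' b b' : cong a a' -> cong b b' -> cong (Node g a b) (Node g a' b').

(* Main.v *)
Require Import Defs.
From mathcomp Require Import all_boot.
From mathcomp Require Import zify.

Ltac dif := match goal with
| H : context[if ?c then _ else _] |- _ => let E := fresh "E" in destruct c eqn:E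
| |- context[if ?c then _ else _] => let E := fresh "E" in destruct c eqn:E
end.
Ltac crush := repeat (dif; try (exfalso; lia)).
Ltac arcs := rewrite /is_arc; lia.

Definition nice C := 1 <= bsize C /\ (forall k, 1 <= k <= bsize C -> bcol C k k.+1 <> Rc) /\
  bcol C 1 (bsize C).+1 <> Rc /\ (bsize C = 1 -> bcol C 1 2 = Bc).

Lemma bsize_compb C i D : bsize (compb C i D) = bsize C + bsize D - 1.
Proof. by []. Qed.

Variant cspec C i D a b : col -> Prop :=
| CS_glue of a = i & b = i + bsize D :
   cspec C i D a b (glue_col (bcol C i i.+1) (bcol D 1 (bsize D).+1))
| CS_D of ~~((a==i)&&(b==i+bsize D)) & i <= a & b <= i + bsize D :
   cspec C i D a b (bcol D (a-i).+1 (b-i).+1)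
| CS_C11 of ~~((i<=a)&&(b<=i+bsize D)) & a <= i & b <= i : cspec C i D a b (bcol C a b)
| CS_C12 of ~~((i<=a)&&(b<=i+bsize D)) & a <= i & i + bsize D <= b :
   cspec C i D a b (bcol C a (b - (bsize D - 1)))
| CS_C21 of ~~((i<=a)&&(b<=i+bsize D)) & i + bsize D <= a & b <= i :
   cspec C i D a b (bcol C (a - (bsize D - 1)) b)
| CS_C22 of ~~((i<=a)&&(b<=i+bsize D)) & i + bsize D <= a & i + bsize D <= b :
   cspec C i D a b (bcol C (a - (bsize D - 1)) (b - (bsize D - 1)))
| CS_U of ~~((i<=a)&&(b<=i+bsize D)) & ~~(((a <= i) || (i + bsize D <= a)) && ((b <= i) || (i + bsize D <= b))) :
   cspec C i D a b Uc.

Lemma cspecP C i D a b : 1 <= bsize D -> cspec C i D a b (bcol (compb C i D) a b).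
Proof.
move=> hD; rewrite /=.
case: ifP => [/andP[/eqP -> /eqP ->]|h1]; first by apply: CS_glue.
case: ifP => h2.
  by move/andP: (h2) => [x y]; apply: CS_D => //; rewrite h1.
case: ifP => h3; last by apply: CS_U; rewrite ?h2 ?h3.
move/andP: h3 => [ha hb].
have h2' : ~~ ((i <= a) && (b <= i + bsize D)) by rewrite h2.
case: (leqP a i) => ha'; case: (leqP b i) => hb'.
- by apply: CS_C11.
- have hb2 : i + bsize D <= b by lia.
  by apply: CS_C12.
- have ha2 : i + bsize D <= a by lia.
  by apply: CS_C21.
- have ha2 : i + bsize D <= a by lia.
  have hb2 : i + bsize D <= b by lia.
  by apply: CS_C22.
Qed.


Variant cspec2 C i D a b : col -> Prop :=
| C2_glue of a = i & b = i + bsize D :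
   cspec2 C i D a b (glue_col (bcol C i i.+1) (bcol D 1 (bsize D).+1))
| C2_D of i <= a & b <= i + bsize D & b < a + bsize D :
   cspec2 C i D a b (bcol D (a-i).+1 (b-i).+1)
| C2_11 of b <= i : cspec2 C i D a b (bcol C a b)
| C2_12 of a <= i & i + bsize D <= b & a + bsize D < b :
   cspec2 C i D a b (bcol C a (b - (bsize D - 1)))
| C2_22 of i + bsize D <= a :
   cspec2 C i D a b (bcol C (a - (bsize D - 1)) (b - (bsize D - 1)))
| C2_U1 of a < i & i < b & b < i + bsize D : cspec2 C i D a b Uc
| C2_U2 of i < a & a < i + bsize D & i + bsize D < b : cspec2 C i D a b Uc.

Lemma cspec2P C i D a b : 1 <= bsize D -> a < b -> cspec2 C i D a b (bcol (compb C i D) a b).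
Proof.
move=> hD hab; case: cspecP => //.
- by move=> -> ->; apply: C2_glue.
- move=> h1 h2 h3; apply: C2_D => //; lia.
- move=> h1 h2 h3; apply: C2_11 => //.
- move=> h1 h2 h3; apply: C2_12 => //; lia.
- lia.
- move=> h1 h2 h3; apply: C2_22 => //.
- move=> h1 h2.
  have [h|h] : (a < i /\ i < b /\ b < i + bsize D) \/ (i < a /\ a < i + bsize D /\ i + bsize D < b) by lia.
  + by case: h => x [y z]; apply: C2_U1.
  + by case: h => x [y z]; apply: C2_U2.
Qed.

Ltac step := match goal with |- context[bcol (compb ?C ?i ?D) ?a ?b] =>
  case: (@cspec2P C i D a b ltac:(simpl bsize; lia) ltac:(simpl bsize; lia)) end;
  intros; simpl bsize in *; try (exfalso; lia).
Ltac crush2 := repeat step.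

Lemma glue_assoc x z : x <> Rc -> z <> Rc -> glue_col (glue_col x Bc) z = glue_col x (glue_col Bc z).
Proof. by case: x; case: z. Qed.

Ltac fin := try done; try (f_equal; lia); try (f_equal; f_equal; lia).
Lemma comp_eq C C' D D' i : 1 <= i <= bsize C -> 1 <= bsize D ->
  bnc_eq C C' -> bnc_eq D D' -> bnc_eq (compb C i D) (compb C' i D').
Proof.
move=> Hi HD [sC hC] [sD hD]; split; first by rewrite /= -sC -sD.
move=> a b; rewrite /is_arc /= -sD => Hab.
crush => //.
all: try (rewrite hC; [|arcs]).
all: try (rewrite hD; [|arcs]).
all: done.
Qed.
Lemma seq_law A B C i j : nice A -> nice B -> nice C -> 1 <= i <= bsize A -> 1 <= j <= bsize B ->
  bnc_eq (compb (compb A i B) (i + j - 1) C) (compb A i (compb B j C)).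
Proof.
move=> [sA [eA [bA uA]]] [sB [eB [bB uB]]] [sC [eC [bC uC]]] Hi Hj; split; first by rewrite !bsize_compb; lia.
move=> a b; rewrite /is_arc !bsize_compb => Hab.
case/andP: Hab => /andP[Ha Hb] Hc. crush2.
all: fin.
have hB1 : bsize B = 1 by lia.
have j1 : j = 1 by lia.
subst j; rewrite hB1 (uB hB1) glue_assoc //; apply: eA; lia.
Qed.
Lemma lunit D : nice D -> bnc_eq (compb unit_bnc 1 D) D.
Proof.
move=> [sD [eD [bD uD]]]; split; first by rewrite bsize_compb /=; lia.
move=> a b; rewrite /is_arc !bsize_compb => Hab; simpl bsize in *.
case/andP: Hab => /andP[Ha Hb] Hc. crush2.
all: rewrite /=; fin.
subst a b; rewrite add1n; by case: (bcol D 1 (bsize D).+1) bD.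
Qed.

Lemma nice_comp A B i : nice A -> nice B -> 1 <= i <= bsize A -> nice (compb A i B).
Proof.
move=> [sA [eA [bA uA]]] [sB [eB [bB uB]]] Hi; split; first by rewrite bsize_compb; lia.
split.
  move=> k; rewrite bsize_compb => Hk; crush2.
  - have hB1 : bsize B = 1 by lia.
    rewrite hB1 (uB hB1); by case: (bcol A i i.+1) (eA i Hi).
  - have -> : (k.+1 - i).+1 = (k - i).+2 by lia.
    apply: eB; lia.
  - apply: eA; lia.
  - have -> : (k.+1 - (bsize B - 1)) = (k - (bsize B - 1)).+1 by lia.
    apply: eA; lia.
rewrite bsize_compb; split.
  crush2.
  - subst i; have hA1 : bsize A = 1 by lia.
    rewrite (uA hA1); by case: (bcol B 1 (bsize B).+1).
  - have -> : (bsize A + bsize B - 1).+1 - (bsize B - 1) = (bsize A).+1 by lia.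
    exact: bA.
move=> h; crush2.
subst i; have hA1 : bsize A = 1 by lia.
have hB1 : bsize B = 1 by lia.
by rewrite (uA hA1) hB1 (uB hB1).
Qed.

Lemma par_law A B C i j : nice A -> nice B -> nice C -> 1 <= i -> i < j -> j <= bsize A ->
  bnc_eq (compb (compb A i B) (j + bsize B - 1) C) (compb (compb A j C) i B).
Proof.
move=> [sA [eA [bA uA]]] [sB [eB [bB uB]]] [sC [eC [bC uC]]] Hi Hij Hj; split; first by rewrite !bsize_compb; lia.
move=> a b; rewrite /is_arc !bsize_compb => Hab.
case/andP: Hab => /andP[Ha Hb] Hc. crush2.
all: fin.
Qed.

Lemma beq_refl C : bnc_eq C C.
Proof. by split. Qed.
Lemma beq_sym C D : bnc_eq C D -> bnc_eq D C.
Proof. move=> [s h]; split=> // a b; rewrite -s => H; by rewrite h. Qed.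
Lemma beq_trans C D E : bnc_eq C D -> bnc_eq D E -> bnc_eq C E.
Proof. move=> [s h] [s' h']; split; first by rewrite s. move=> a b H; rewrite h // h' //; by rewrite -s. Qed.

Arguments beq_sym {C D}.
Arguments beq_trans {C D E}.

Lemma nice_size C : nice C -> 1 <= bsize C.
Proof. by case. Qed.

Lemma nice_gen g : nice (gen_bnc g).
Proof.
split; first by case: g.
split; last by case: g.
move=> k; case: g => /= Hk; (have [->|->] : k = 1 \/ k = 2 by lia) => //.
Qed.

Lemma nice_unit : nice unit_bnc.
Proof. split => //; split => //= k Hk; have -> : k = 1 by lia. by []. Qed.

Lemma size_gen g : bsize (gen_bnc g) = 2.
Proof. by case: g. Qed.

Lemma ev_node g l r : ev (Node g l r) = compb (compb (gen_bnc g) 2 (ev r)) 1 (ev l).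
Proof. by []. Qed.

Lemma nice_ev t : nice (ev t).
Proof.
elim: t => [|g l IHl r IHr]; first exact: nice_unit.
have h1 : nice (compb (gen_bnc g) 2 (ev r)) by apply: nice_comp => //; [exact: nice_gen | by rewrite size_gen].
rewrite ev_node; apply: nice_comp => //.
 have := @nice_size _ h1; lia.
Qed.

Lemma size_ev_node g l r : bsize (ev (Node g l r)) = bsize (ev l) + bsize (ev r).
Proof.
rewrite ev_node !bsize_compb size_gen; have := @nice_size _ (nice_ev l); have := @nice_size _ (nice_ev r); lia.
Qed.

Lemma gen_unit g : bnc_eq (ev (Node g Leaf Leaf)) (gen_bnc g).
Proof.
case: g; split => // a b; rewrite /is_arc /= => H;
(have : (a = 1 /\ b = 2) \/ (a = 1 /\ b = 3) \/ (a = 2 /\ b = 3) by lia);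
by case=> [[-> ->]|[[-> ->]|[-> ->]]].
Qed.

Lemma gen_assoc g : bnc_eq (compb (gen_bnc g) 1 (gen_bnc g)) (compb (gen_bnc g) 2 (gen_bnc g)).
Proof.
split; first by case: g.
move=> a b; rewrite /is_arc bsize_compb size_gen => H.
have : (a = 1 /\ b = 2) \/ (a = 1 /\ b = 3) \/ (a = 1 /\ b = 4) \/ (a = 2 /\ b = 3) \/ (a = 2 /\ b = 4) \/ (a = 3 /\ b = 4) by lia.
by case=> [[-> ->]|[[-> ->]|[[-> ->]|[[-> ->]|[[-> ->]|[-> ->]]]]]]; case: g.
Qed.

Ltac sz := rewrite ?bsize_compb; lia.
Ltac nc := repeat first [assumption | apply: nice_comp | sz].

Lemma ev_assoc g a b c : bnc_eq (ev (Node g (Node g a b) c)) (ev (Node g a (Node g b c))).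
Proof.
rewrite !ev_node.
have nG := nice_gen g; have sG := size_gen g.
have nA := nice_ev a; have nB := nice_ev b; have nC := nice_ev c.
have sA := @nice_size _ nA; have sB := @nice_size _ nB; have sC := @nice_size _ nC.
set G := gen_bnc g in nG sG *; set A := ev a in nA sA *; set B := ev b in nB sB *; set C := ev c in nC sC *.
set Y := compb G 2 C.
have nY : nice Y by nc.
have sY : bsize Y = bsize C + 1 by rewrite /Y bsize_compb; lia.
have e1 : bnc_eq (compb (compb Y 1 (compb G 2 B)) 1 A) (compb Y 1 (compb (compb G 2 B) 1 A)).
  by apply: (seq_law Y (compb G 2 B) A 1 1); nc.
have e2 : bnc_eq (compb (compb Y 1 G) 2 B) (compb Y 1 (compb G 2 B)).
  by apply: (seq_law Y G B 1 2); nc.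
have e3a : bnc_eq (compb (compb G 1 G) 3 C) (compb Y 1 G).
  by have := par_law G G C 1 2 nG nG nC; rewrite sG; apply; lia.
have e3b : bnc_eq (compb (compb G 1 G) 3 C) (compb (compb G 2 G) 3 C).
  apply: comp_eq; [sz|sz|exact: gen_assoc|exact: beq_refl].
have e3c : bnc_eq (compb (compb G 2 G) 3 C) (compb G 2 Y).
  by apply: (seq_law G G C 2 2); nc.
have e3 : bnc_eq (compb Y 1 G) (compb G 2 Y).
  by apply: beq_trans (beq_sym e3a) (beq_trans e3b e3c).
have e4 : bnc_eq (compb (compb G 2 Y) 2 B) (compb G 2 (compb Y 1 B)).
  by apply: (seq_law G Y B 2 1); nc.
apply: beq_sym.
apply: beq_trans.
  apply: (comp_eq _ _ _ _ 1 _ _ (beq_sym e4) (beq_refl A)); sz.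
apply: beq_trans.
  apply: (comp_eq _ _ _ _ 1 _ _ (comp_eq _ _ _ _ 2 _ _ (beq_sym e3) (beq_refl B)) (beq_refl A)); sz.
apply: beq_trans.
  apply: (comp_eq _ _ _ _ 1 _ _ e2 (beq_refl A)); sz.
exact: e1.
Qed.

Lemma cong_ev t u : cong t u -> bnc_eq (ev t) (ev u).
Proof.
elim=> {t u}.
- move=> g a b c; exact: ev_assoc.
- move=> t; exact: beq_refl.
- move=> t u _; exact: beq_sym.
- move=> t u v _ h1 _ h2; exact: beq_trans h1 h2.
- move=> g a a' b b' _ ha _ hb; rewrite !ev_node.
  have sa := @nice_size _ (nice_ev a); have sb := @nice_size _ (nice_ev b).
  have sg := size_gen g.
  apply: comp_eq => //; try sz.
  apply: comp_eq => //; try sz.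
Qed.

Fixpoint leaves t := match t with Leaf => 1 | Node _ l r => leaves l + leaves r end.

Lemma leaves_ev t : bsize (ev t) = leaves t.
Proof. elim: t => [|g l IHl r IHr] //; by rewrite size_ev_node IHl IHr. Qed.

Fixpoint graft t i u := match t with
  | Leaf => u
  | Node g l r => if i <= leaves l then Node g (graft l i u) r
                  else Node g l (graft r (i - leaves l) u) end.

Lemma graft_ev t i u : 1 <= i <= leaves t -> bnc_eq (compb (ev t) i (ev u)) (ev (graft t i u)).
Proof.
elim: t i => [|g l IHl r IHr] i /= Hi.
  have -> : i = 1 by lia.
  exact: lunit (nice_ev u).
have nG := nice_gen g; have sG := size_gen g.
have nL := nice_ev l; have nR := nice_ev r; have nU := nice_ev u.
have sL := leaves_ev l; have sR := leaves_ev r; have sU := @nice_size _ nU.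
have sL1 := @nice_size _ nL; have sR1 := @nice_size _ nR.
have nA : nice (compb (gen_bnc g) 2 (ev r)) by nc.
case: ifP => Hil; rewrite !ev_node.
  apply: beq_trans.
    have := seq_law (compb (gen_bnc g) 2 (ev r)) (ev l) (ev u) 1 i nA nL nU.
    rewrite addKn; apply; sz.
  apply: comp_eq; try sz; first exact: beq_refl.
  apply: IHl; lia.
set j := i - leaves l + 1.
apply: beq_trans.
  have := par_law (compb (gen_bnc g) 2 (ev r)) (ev l) (ev u) 1 j nA nL nU.
  have -> : j + bsize (ev l) - 1 = i by rewrite /j; lia.
  apply; rewrite /j; sz.
apply: comp_eq; try sz; last exact: beq_refl.
apply: beq_trans.
  have := seq_law (gen_bnc g) (ev r) (ev u) 2 (j - 1) nG nR nU.
  have -> : 2 + (j - 1) - 1 = j by rewrite /j; lia.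
  apply; rewrite /j; sz.
apply: comp_eq; try sz; first exact: beq_refl.
have -> : j - 1 = i - leaves l by rewrite /j; lia.
apply: IHr; lia.
Qed.

Lemma surj C : in_O C -> exists t, bnc_eq (ev t) C.
Proof.
elim=> {C}.
- by exists Leaf; exact: beq_refl.
- by exists (Node gR Leaf Leaf); exact: (gen_unit gR).
- by exists (Node gW Leaf Leaf); exact: (gen_unit gW).
- move=> C D i _ [t Ht] _ [u Hu] Hi.
  exists (graft t i u).
  have [s _] := Ht.
  have sU := @nice_size _ (nice_ev u).
  have hg : 1 <= i <= leaves t by rewrite -leaves_ev s; lia.
  apply: (beq_trans (beq_sym (graft_ev t i u hg))).
  apply: comp_eq => //; rewrite ?s //.
Qed.

Lemma inO_ev t : in_O (ev t).
Proof.
elim: t => [|g l IHl r IHr]; first exact: inO_unit.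
rewrite ev_node; apply: inO_comp => //.
  apply: inO_comp => //; first by case: g; [exact: inO_r|exact: inO_w].
  by rewrite size_gen.
rewrite bsize_compb size_gen; have := @nice_size _ (nice_ev r); lia.
Qed.

Lemma colL G R L a b : bsize G = 2 -> 1 <= bsize R -> 1 <= bsize L ->
  1 <= a -> a < b -> b <= bsize L + 1 -> ~~((a==1)&&(b==bsize L+1)) ->
  bcol (compb (compb G 2 R) 1 L) a b = bcol L a b.
Proof. move=> sG sR sL h1 h2 h3 h4; crush2; fin. Qed.

Lemma colLb G R L : bsize G = 2 -> 1 <= bsize R -> 1 <= bsize L ->
  bcol (compb (compb G 2 R) 1 L) 1 (bsize L + 1) = glue_col (bcol G 1 2) (bcol L 1 (bsize L).+1).
Proof. move=> sG sR sL; crush2; fin. Qed.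

Lemma colR G R L a b : bsize G = 2 -> 1 <= bsize R -> 1 <= bsize L ->
  bsize L + 1 <= a -> a < b -> b <= bsize L + bsize R + 1 ->
  ~~((a==bsize L + 1)&&(b==bsize L + bsize R + 1)) ->
  bcol (compb (compb G 2 R) 1 L) a b = bcol R (a - bsize L) (b - bsize L).
Proof. move=> sG sR sL h1 h2 h3 h4; crush2; fin. Qed.

Lemma colRb G R L : bsize G = 2 -> 1 <= bsize R -> 1 <= bsize L ->
  bcol (compb (compb G 2 R) 1 L) (bsize L + 1) (bsize L + bsize R + 1) = glue_col (bcol G 2 3) (bcol R 1 (bsize R).+1).
Proof. move=> sG sR sL; crush2; fin. Qed.

Lemma colmid G R L c : bsize G = 2 -> 1 <= bsize R -> 1 <= bsize L ->
  bsize L + 1 < c -> c < bsize L + bsize R + 1 -> bcol (compb (compb G 2 R) 1 L) 1 c = Uc.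
Proof. move=> sG sR sL h1 h2; crush2; fin. Qed.

Lemma colbase G R L : bsize G = 2 -> 1 <= bsize R -> 1 <= bsize L ->
  bcol (compb (compb G 2 R) 1 L) 1 (bsize L + bsize R + 1) = bcol G 1 3.
Proof. move=> sG sR sL; crush2; fin. Qed.

Definition hd t := match t with Leaf => None | Node g _ _ => Some g end.
Fixpoint normal t : Prop := match t with Leaf => True | Node g l r => normal l /\ normal r /\ hd l <> Some g end.

Lemma glue_inj x y z : x <> Rc -> y <> Rc -> z <> Rc -> glue_col x y = glue_col x z -> y = z.
Proof. by case: x; case: y; case: z. Qed.

Lemma ev_base g l r : bcol (ev (Node g l r)) 1 (bsize (ev l) + bsize (ev r) + 1) = bcol (gen_bnc g) 1 3.
Proof.
rewrite ev_node colbase //; [exact: size_gen | exact: (@nice_size _ (nice_ev r)) | exact: (@nice_size _ (nice_ev l))].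
Qed.

Lemma leq_split g l r l' r' : hd l' <> Some g -> bnc_eq (ev (Node g l r)) (ev (Node g l' r')) ->
  bsize (ev l') <= bsize (ev l).
Proof.
move=> hl [s h]; move: (s); rewrite !size_ev_node => s'.
have sL := @nice_size _ (nice_ev l); have sR := @nice_size _ (nice_ev r).
have sL' := @nice_size _ (nice_ev l'); have sR' := @nice_size _ (nice_ev r').
case: (leqP (bsize (ev l')) (bsize (ev l))) => // lt.
have := h 1 (bsize (ev l') + 1).
rewrite /is_arc size_ev_node.
have -> : (0 < 1 < bsize (ev l') + 1) && (bsize (ev l') + 1 <= (bsize (ev l) + bsize (ev r)).+1) by apply/andP; split; [apply/andP; split|]; lia.
move=> /(_ isT).
rewrite ev_node colmid; try lia; last exact: size_gen.
rewrite ev_node colLb; try lia; last exact: size_gen.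
case: l' hl lt sL' {h s s'} => [|h x y] hl lt sL'; first by move: lt => /=; lia.
have e : (bsize (ev (Node h x y))).+1 = bsize (ev x) + bsize (ev y) + 1 by rewrite size_ev_node; lia.
rewrite e ev_base.
by case: g h hl {e lt sL'} => [] [].
Qed.

Lemma inj t1 t2 : normal t1 -> normal t2 -> bnc_eq (ev t1) (ev t2) -> t1 = t2.
Proof.
elim: t1 t2 => [|g l IHl r IHr] [|g' l' r'] //.
- move=> _ _ [s _]; move: s; rewrite size_ev_node /=.
  have := @nice_size _ (nice_ev l'); have := @nice_size _ (nice_ev r'); lia.
- move=> _ _ [s _]; move: s; rewrite size_ev_node /=.
  have := @nice_size _ (nice_ev l); have := @nice_size _ (nice_ev r); lia.
move=> [nl [nr hl]] [nl' [nr' hl']] E.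
have [s h] := E.
move: (s); rewrite !size_ev_node => s'.
have sL := @nice_size _ (nice_ev l); have sR := @nice_size _ (nice_ev r).
have sL' := @nice_size _ (nice_ev l'); have sR' := @nice_size _ (nice_ev r').
have eg : g = g'.
  have := h 1 (bsize (ev l) + bsize (ev r) + 1).
  rewrite /is_arc size_ev_node.
  have -> : (0 < 1 < bsize (ev l) + bsize (ev r) + 1) && (bsize (ev l) + bsize (ev r) + 1 <= (bsize (ev l) + bsize (ev r)).+1) by apply/andP; split; [apply/andP; split|]; lia.
  move=> /(_ isT); rewrite ev_base s' ev_base.
  by case: g g' {IHl IHr h E s hl hl'} => [] [].
subst g'.
have ep : bsize (ev l) = bsize (ev l').
  have h1 := leq_split _ _ _ _ _ hl' E.
  have h2 := leq_split _ _ _ _ _ hl (beq_sym E).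
  lia.
have eq : bsize (ev r) = bsize (ev r') by lia.
have [nL [eL [bL uL]]] := nice_ev l; have [nL' [eL' [bL' uL']]] := nice_ev l'.
have [nR [eR [bR uR]]] := nice_ev r; have [nR' [eR' [bR' uR']]] := nice_ev r'.
have nG := nice_gen g; case: nG => _ [eG _].
have sG := size_gen g.
have G12 : bcol (gen_bnc g) 1 2 <> Rc by apply: eG; rewrite sG.
have G23 : bcol (gen_bnc g) 2 3 <> Rc by apply: eG; rewrite sG.
have El : bnc_eq (ev l) (ev l').
  split => // a b; rewrite /is_arc => /andP[/andP[ha hab] hb].
  case: (boolP ((a == 1) && (b == bsize (ev l) + 1))) => hc.
    case/andP: hc => /eqP -> /eqP ->.
    have := h 1 (bsize (ev l) + 1).
    rewrite /is_arc size_ev_node.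
    have -> : (0 < 1 < bsize (ev l) + 1) && (bsize (ev l) + 1 <= (bsize (ev l) + bsize (ev r)).+1) by apply/andP; split; [apply/andP; split|]; lia.
    move=> /(_ isT); rewrite !ev_node => H.
    have c1 := colLb (gen_bnc g) (ev r) (ev l) sG sR sL.
    have c2 := colLb (gen_bnc g) (ev r') (ev l') sG sR' sL'.
    rewrite c1 ep c2 in H; rewrite ep in bL.
    rewrite ep addn1; exact: (glue_inj _ _ _ G12 bL bL' H).
  have := h a b.
  rewrite /is_arc size_ev_node.
  have -> : (0 < a < b) && (b <= (bsize (ev l) + bsize (ev r)).+1) by apply/andP; split; [apply/andP; split|]; lia.
  move=> /(_ isT); rewrite !ev_node.
  rewrite colL //; try lia.
  rewrite colL //; try lia.
have Er : bnc_eq (ev r) (ev r').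
  split => // a b; rewrite /is_arc => /andP[/andP[ha hab] hb].
  case: (boolP ((a == 1) && (b == bsize (ev r) + 1))) => hc.
    case/andP: hc => /eqP -> /eqP ->.
    have := h (bsize (ev l) + 1) (bsize (ev l) + bsize (ev r) + 1).
    rewrite /is_arc size_ev_node.
    have -> : (0 < bsize (ev l) + 1 < bsize (ev l) + bsize (ev r) + 1) && (bsize (ev l) + bsize (ev r) + 1 <= (bsize (ev l) + bsize (ev r)).+1) by apply/andP; split; [apply/andP; split|]; lia.
    move=> /(_ isT); rewrite !ev_node => H.
    have c1 := colRb (gen_bnc g) (ev r) (ev l) sG sR sL.
    have c2 := colRb (gen_bnc g) (ev r') (ev l') sG sR' sL'.
    rewrite c1 ep eq c2 in H; rewrite eq in bR.
    rewrite eq addn1; exact: (glue_inj _ _ _ G23 bR bR' H).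
  have := h (a + bsize (ev l)) (b + bsize (ev l)).
  rewrite /is_arc size_ev_node.
  have -> : (0 < a + bsize (ev l) < b + bsize (ev l)) && (b + bsize (ev l) <= (bsize (ev l) + bsize (ev r)).+1) by apply/andP; split; [apply/andP; split|]; lia.
  move=> /(_ isT); rewrite !ev_node.
  rewrite colR //; try lia.
  rewrite colR //; try lia.
  by rewrite -ep !addnK.
by rewrite (IHl l' nl nl' El) (IHr r' nr nr' Er).
Qed.

Lemma norm_node g l r : normal l -> normal r -> exists n, cong (Node g l r) n /\ normal n.
Proof.
elim: l r => [|g1 a IHa b IHb] r nl nr.
  by exists (Node g Leaf r); split; [exact: cong_refl|].
have [eg|ng] : g1 = g \/ g1 <> g by case: (g1); case: (g); [left|right|right|left].
  subst g1; case: nl => na [nb ha].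
  have [n' [c' N']] := IHb r nb nr.
  exists (Node g a n'); split; last by [].
  apply: cong_trans; first exact: cong_assoc.
  apply: cong_node => //; exact: cong_refl.
exists (Node g (Node g1 a b) r); split; first exact: cong_refl.
split=> //; split=> //= [[e]]; exact: ng e.
Qed.

Lemma norm_exists t : exists n, cong t n /\ normal n.
Proof.
elim: t => [|g l [nl [cl Nl]] r [nr [cr Nr]]]; first by exists Leaf; split; [exact: cong_refl|].
have [n [c N]] := norm_node g nl nr Nl Nr.
exists n; split => //.
apply: cong_trans c; exact: cong_node.
Qed.

Theorem theorem3p33 :
  (* the morphism from the free operad lands in O *)
  (forall t : tree, in_O (ev t)) /\
  (* and is onto O *)
  (forall C : bnc, in_O C -> exists t : tree, bnc_eq (ev t) C) /\
  (* and its kernel is exactly the congruence generated by the two relations *)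
  (forall t1 t2 : tree, bnc_eq (ev t1) (ev t2) <-> cong t1 t2).
Proof.
split; first exact: inO_ev.
split; first exact: surj.
move=> t1 t2; split; last exact: cong_ev.
move=> H.
have [n1 [c1 N1]] := norm_exists t1.
have [n2 [c2 N2]] := norm_exists t2.
have e : n1 = n2.
  apply: inj N1 N2 _.
  exact: beq_trans (beq_sym (cong_ev _ _ c1)) (beq_trans H (cong_ev _ _ c2)).
subst n2; apply: cong_trans c1 _; exact: cong_sym.
Qed.
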